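(* Let $G$ be a profinite-$C$ group and let $A$ be a nontrivial abelian closed normal subgroup of $G$. Then $A$ is an internal cartesian product of $G$-invariant subgroups of $A$ of prime order.
   Context: A permutable complement of a subgroup $H$ of a group $G$ is a subgroup $K$ with $G=HK$ and $H\cap K=1$. A profinite group $G$ is a profinite-$C$ group if every closed subgroup of $G$ has a closed permutable complement in $G$. A profinite group $A$ is the internal cartesian product of a family $\{H_i\}_{i\in I}$ of its subgroups if: each $H_i$ is a closed normal subgroup of $A$; $A$ is the topological closure of $\langle H_i\mid i\in I\rangle$; and $\bigcap_{i\in I}\overline{\langle H_j\mid j\ne i\rangle}=1$. *)

(* Defs.v *)
From mathcomp Require Import all_boot all_order all_algebra.
From mathcomp Require Import all_classical all_reals all_analysis.
Set Implicit Arguments. Unset Strict Implicit. Unset Printing Implicit Defensive.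
Local Open Scope classical_set_scope.

Section ProfiniteDefs.
Variables (T : topologicalType) (mul : T -> T -> T) (inv : T -> T) (one : T).

Definition group_axioms : Prop :=
  [/\ forall x y z, mul x (mul y z) = mul (mul x y) z,
      forall x, mul one x = x, forall x, mul x one = x,
      forall x, mul (inv x) x = one & forall x, mul x (inv x) = one].

Definition topological_group : Prop :=
  [/\ group_axioms,
      continuous (fun p : T * T => mul p.1 p.2) & continuous inv].

Definition profinite_group : Prop :=
  [/\ topological_group, compact [set: T], hausdorff_space T
    & totally_disconnected [set: T]].

Definition is_subgroup (H : set T) : Prop :=
  [/\ H one, forall x y, H x -> H y -> H (mul x y) & forall x, H x -> H (inv x)].

Definition closed_subgroup (H : set T) : Prop := is_subgroup H /\ closed H.

Definition normalized_by (S H : set T) : Prop :=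
  forall g h, S g -> H h -> H (mul (inv g) (mul h g)).

Definition closed_normal_subgroup_of (A H : set T) : Prop :=
  [/\ closed_subgroup H, H `<=` A & normalized_by A H].

Definition abelian_set (A : set T) : Prop :=
  forall x y, A x -> A y -> mul x y = mul y x.

Definition permutable_complement (H K : set T) : Prop :=
  [/\ is_subgroup K,
      (forall g, exists h k, [/\ H h, K k & g = mul h k])
    & H `&` K = [set one]].

Definition profinite_C_group : Prop :=
  profinite_group /\
  forall H, closed_subgroup H ->
    exists K, closed_subgroup K /\ permutable_complement H K.

Definition gen_subgroup (S : set T) : set T :=
  \bigcap_(K in [set K | is_subgroup K /\ S `<=` K]) K.

Definition internal_cartesian_product (A : set T) (I : Type) (Hs : I -> set T)
  : Prop :=
  [/\ forall i, closed_normal_subgroup_of A (Hs i),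
      A = closure (gen_subgroup (\bigcup_i Hs i))
    & \bigcap_i closure (gen_subgroup (\bigcup_(j in [set j | j <> i]) Hs j))
        = [set one]].

Definition has_prime_order (H : set T) : Prop :=
  exists p : nat, prime p /\ (H #= `I_p)%card.

End ProfiniteDefs.

(* Main.v *)
Require Import Defs.
From mathcomp Require Import all_boot all_order all_algebra.
From mathcomp Require Import all_classical all_reals all_analysis.
From mathcomp Require Import Rstruct.
Set Implicit Arguments. Unset Strict Implicit. Unset Printing Implicit Defensive.
Local Open Scope classical_set_scope.

Section Grp.
Variables (T : topologicalType) (mul : T -> T -> T) (inv : T -> T) (one : T).
Hypothesis HG : group_axioms mul inv one.
Hypothesis Hmul : continuous (fun p : T * T => mul p.1 p.2).
Hypothesis Hinv : continuous inv.
Local Notation "x ⋅ y" := (mul x y) (at level 40, left associativity).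

Lemma mulA x y z : x ⋅ (y ⋅ z) = x ⋅ y ⋅ z. Proof. by case: HG. Qed.
Lemma mul1g x : one ⋅ x = x. Proof. by case: HG. Qed.
Lemma mulg1 x : x ⋅ one = x. Proof. by case: HG. Qed.
Lemma mulVg x : inv x ⋅ x = one. Proof. by case: HG. Qed.
Lemma mulgV x : x ⋅ inv x = one. Proof. by case: HG. Qed.
Lemma mulKg x y : inv x ⋅ (x ⋅ y) = y. Proof. by rewrite mulA mulVg mul1g. Qed.
Lemma mulVKg x y : x ⋅ (inv x ⋅ y) = y. Proof. by rewrite mulA mulgV mul1g. Qed.
Lemma mulgK x y : y ⋅ x ⋅ inv x = y. Proof. by rewrite -mulA mulgV mulg1. Qed.
Lemma mulgVK x y : y ⋅ inv x ⋅ x = y. Proof. by rewrite -mulA mulVg mulg1. Qed.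
Lemma mulg_inj x y z : x ⋅ y = x ⋅ z -> y = z.
Proof. by move=> e; rewrite -(mulKg x y) e mulKg. Qed.
Lemma mulg_injr x y z : y ⋅ x = z ⋅ x -> y = z.
Proof. by move=> e; rewrite -(mulgK x y) e mulgK. Qed.
Lemma inv_uniq x y : x ⋅ y = one -> y = inv x.
Proof. by move=> e; apply: (@mulg_inj x); rewrite e mulgV. Qed.
Lemma invK x : inv (inv x) = x.
Proof. by symmetry; apply: inv_uniq; rewrite mulVg. Qed.
Lemma invM x y : inv (x ⋅ y) = inv y ⋅ inv x.
Proof. by symmetry; apply: inv_uniq; rewrite -mulA mulVKg mulgV. Qed.
Lemma inv1 : inv one = one.
Proof. by symmetry; apply: inv_uniq; rewrite mulg1. Qed.
Lemma inv_eq1 x : inv x = one -> x = one.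
Proof. by move=> e; rewrite -(invK x) e inv1. Qed.
Lemma mul_eq1 x y : x ⋅ y = one -> x = inv y.
Proof. by move=> e; apply: (@mulg_injr y); rewrite e mulVg. Qed.

Fixpoint pw (x : T) (n : nat) : T := if n is n'.+1 then x ⋅ pw x n' else one.
Lemma pw0 x : pw x 0 = one. Proof. by []. Qed.
Lemma pwS x n : pw x n.+1 = x ⋅ pw x n. Proof. by []. Qed.
Lemma pw1 x : pw x 1 = x. Proof. by rewrite /= mulg1. Qed.
Lemma pwD x m n : pw x (m + n) = pw x m ⋅ pw x n.
Proof. by elim: m => [|m IH] /=; rewrite ?mul1g // IH mulA. Qed.
Lemma pwSr x n : pw x n.+1 = pw x n ⋅ x.
Proof. by rewrite -addn1 pwD pw1. Qed.
Lemma pwM x m n : pw x (m * n) = pw (pw x m) n.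
Proof. by elim: n => [|n IH]; rewrite ?muln0 // mulnS pwD IH. Qed.
Lemma pw1g n : pw one n = one.
Proof. by elim: n => //= n ->; rewrite mulg1. Qed.
Lemma commute_pw x y n : x ⋅ y = y ⋅ x -> pw x n ⋅ y = y ⋅ pw x n.
Proof.
move=> c; elim: n => [|n IH] /=; first by rewrite mul1g mulg1.
by rewrite -mulA IH mulA c mulA.
Qed.
Lemma pwMc x y n : x ⋅ y = y ⋅ x -> pw (x ⋅ y) n = pw x n ⋅ pw y n.
Proof.
move=> c; elim: n => [|n IH] /=; first by rewrite mulg1.
rewrite IH -!mulA; congr (x ⋅ _); rewrite !mulA; congr (_ ⋅ pw y n).
by apply: esym; apply: commute_pw.
Qed.
Lemma inv_pw x n : inv (pw x n) = pw (inv x) n.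
Proof.
elim: n => [|n IH]; first exact: inv1.
by rewrite pwSr invM IH.
Qed.
Lemma commute_inv x y : x ⋅ y = y ⋅ x -> inv x ⋅ y = y ⋅ inv x.
Proof.
move=> c; apply: (@mulg_inj x); by rewrite mulVKg mulA c mulgK.
Qed.


Lemma nbhs_mul2 a b (W : set T) : nbhs (a ⋅ b) W ->
  exists P Q, [/\ nbhs a P, nbhs b Q & forall x y, P x -> Q y -> W (x ⋅ y)].
Proof.
move=> /(@Hmul (a, b)) [[P Q] /= [nP nQ] sPQ].
by exists P, Q; split => // x y Px Qy; apply: (sPQ (x, y)).
Qed.

Lemma nbhs_lmul a x (W : set T) : nbhs (a ⋅ x) W -> nbhs x [set y | W (a ⋅ y)].
Proof.
move=> /nbhs_mul2 [P [Q [nP nQ sPQ]]]; apply: filterS nQ => y Qy.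
exact: sPQ (nbhs_singleton nP) Qy.
Qed.

Lemma nbhs_rmul a x (W : set T) : nbhs (x ⋅ a) W -> nbhs x [set y | W (y ⋅ a)].
Proof.
move=> /nbhs_mul2 [P [Q [nP nQ sPQ]]]; apply: filterS nP => y Py.
exact: sPQ Py (nbhs_singleton nQ).
Qed.

Lemma nbhs_inv x (W : set T) : nbhs (inv x) W -> nbhs x [set y | W (inv y)].
Proof. by move=> /(@Hinv x). Qed.

Lemma nbhs_transl g (W : set T) : nbhs one W -> nbhs g [set y | W (inv g ⋅ y)].
Proof. by move=> nW; apply: nbhs_lmul; rewrite mulVg. Qed.

Lemma closure_subgroup S : is_subgroup mul inv one S -> is_subgroup mul inv one (closure S).
Proof.
case=> S1 SM SV; split.
- exact: subset_closure.
- have R s x : S s -> closure S x -> closure S (x ⋅ s).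
    move=> Ss cx B /nbhs_rmul /cx [t [St Bt]].
    by exists (t ⋅ s); split => //; apply: SM.
  move=> x y cx cy B /nbhs_interior /nbhs_lmul /cy [s [Ss Bs]].
  by have /(_ B Bs) := R s x Ss cx.
- move=> x cx B /nbhs_inv /cx [s [Ss Bs]].
  by exists (inv s); split => //; apply: SV.
Qed.

Lemma nbhs_conj g x (W : set T) : nbhs (inv g ⋅ (x ⋅ g)) W ->
  nbhs x [set y | W (inv g ⋅ (y ⋅ g))].
Proof. by move=> /nbhs_lmul /nbhs_rmul. Qed.

Lemma closure_normal S : normalized_by mul inv [set: T] S ->
  normalized_by mul inv [set: T] (closure S).
Proof.
move=> nS g x _ cx B /nbhs_conj /cx [s [Ss Bs]].
by exists (inv g ⋅ (s ⋅ g)); split => //; apply: nS.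
Qed.


Lemma closed_pre (f : T -> T) (C : set T) :
  (forall p B, nbhs (f p) B -> nbhs p [set y | B (f y)]) ->
  closed C -> closed [set y | C (f y)].
Proof.
move=> hf cC p cp; apply: cC => B /hf /cp [y [Cy By]].
by exists (f y).
Qed.

Lemma closed_lmul a C : closed C -> closed [set y | C (a ⋅ y)].
Proof. by apply: closed_pre => p B /nbhs_lmul. Qed.

Lemma closed_subgroupI (D : set (set T)) :
  (forall K, D K -> closed_subgroup mul inv one K) ->
  closed_subgroup mul inv one (\bigcap_(K in D) K).
Proof.
move=> hD; split; last by apply: closed_bigI => K /hD [].
split.
- by move=> K /hD [[]].
- by move=> x y hx hy K DK; have [[_ hM _] _] := hD K DK; apply: hM; [apply: hx|apply: hy].
- by move=> x hx K DK; have [[_ _ hV] _] := hD K DK; apply: hV; apply: hx.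
Qed.

Variable Hhaus : hausdorff_space T.
Variable Hcpt : compact [set: T].
Variable Htd : totally_disconnected [set: T].

Lemma zero_dim x y : x <> y -> exists U : set T, [/\ clopen U, U x & ~ U y].
Proof.
move=> xy; apply: contrapT => nU.
pose D := [set U : set T | clopen U /\ U x].
pose Q := \bigcap_(U in D) U.
have QE z : Q z -> forall U, clopen U -> U x -> U z by move=> Qz U cU Ux; exact: Qz.
have Qy : Q y.
  move=> U [cU Ux]; apply: contrapT => nUy; apply: nU; by exists U.
have Qx : Q x by move=> U [].
have clQ : closed Q by apply: closed_bigI => U [[]].
suff cQ : connected Q.
  have := @connected_component_max T [set: T] Q x Qx (fun _ _ => I) cQ y Qy.
  by rewrite Htd // => /= yx; apply: xy; rewrite yx.
move=> B [b Bb] [Op oO BQO] [F cF BQF].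
pose Q1 := Q `&` F; pose Q2 := Q `&` ~` Op.
have cQ1 : closed Q1 by apply: closedI.
have cQ2 : closed Q2 by apply: closedI => //; apply: open_closedC.
have Q12 : Q1 `&` Q2 = set0.
  apply/seteqP; split => // z [[Qz Fz] [_ nOz]].
  have : (Q `&` F) z by [].
  by rewrite -BQF BQO => -[].
have nT : normal_space T by apply: compact_normal.
have [U1 [U2 [oU1 oU2 sQ1 sQ2 U12]]] :=
  (iffLR (@normal_openP Rdefinitions.R T) nT) Q1 Q2 cQ1 cQ2 Q12.
have QU z : Q z -> U1 z \/ U2 z.
  move=> Qz; have [Oz|nOz] := pselect (Op z).
    by left; apply: sQ1; have : (Q `&` Op) z by []; rewrite -BQO BQF.
  by right; apply: sQ2.
(* compactness: find a clopen C containing x inside U1 `|` U2 *)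
pose K := ~` (U1 `|` U2).
have cK : compact K.
  apply: (subclosed_compact _ Hcpt) => //.
  by apply: open_closedC; apply: openU.
pose g (C : set T) := [set C' | D C' /\ C' `<=` C].
pose Fl := filter_from D g.
have FF : Filter Fl.
  apply: filter_from_filter; first by exists setT; split => //; exact: clopenT.
  move=> C1 C2 [cC1 C1x] [cC2 C2x]; exists (C1 `&` C2).
    by split; [exact: clopenI|].
  by move=> C' [DC' sC']; split; split => // z /sC' [].
have := (iffLR (compact_near_coveringP K) cK) (set T) Fl (fun C z => ~ C z) FF.
case.
- move=> z Kz.
  have nQz : ~ Q z by move=> /QU [] h; apply: Kz; [left|right].
  have [C [DC nCz]] : exists C, D C /\ ~ C z.
    apply: contrapT => hh; apply: nQz => C DC; apply: contrapT => nCz.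
    by apply: hh; exists C.
  exists (~` C, g C); first split.
  + apply: open_nbhs_nbhs; split => //; apply: closed_openC; by case: DC => -[].
  + by exists C.
  + by case=> z' C' /= [nCz' [_ sC']] /sC'.
- move=> C0 DC0 sub.
  have KC0 : K `<=` (fun z => ~ C0 z) by apply: sub; split => //.
  have C0U z : C0 z -> U1 z \/ U2 z.
    move=> C0z; apply: contrapT => /not_orP [n1 n2].
    by apply: (KC0 z) => // -[].
  have [cC0 C0x] := DC0.
  have [U1x|U2x] := QU x Qx.
  +
    have cV : clopen (C0 `&` U1).
      split; first by apply: openI => //; case: cC0.
      have -> : C0 `&` U1 = C0 `&` ~` U2.
        apply/seteqP; split => z [C0z h]; split => //.
          by move=> U2z; have : (U1 `&` U2) z by []; rewrite U12.
        by case: (C0U z C0z).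
      by apply: closedI; [case: cC0|apply: open_closedC].
    have QV := QE _ _ (C0 `&` U1) cV (conj C0x U1x).
    apply/seteqP; split; first by rewrite BQO => z [].
    move=> z Qz; rewrite BQO; split => //; apply: contrapT => nOz.
    have U2z : U2 z by apply: sQ2.
    have [_ U1z] := QV z Qz.
    by have : (U1 `&` U2) z by []; rewrite U12.
  + have cV : clopen (C0 `&` U2).
      split; first by apply: openI => //; case: cC0.
      have -> : C0 `&` U2 = C0 `&` ~` U1.
        apply/seteqP; split => z [C0z h]; split => //.
          by move=> U1z; have : (U1 `&` U2) z by []; rewrite U12.
        by case: (C0U z C0z).
      by apply: closedI; [case: cC0|apply: open_closedC].
    have QV := QE _ _ (C0 `&` U2) cV (conj C0x U2x).
    exfalso.
    have Bb' := Bb; rewrite BQF in Bb'.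
    have U1b : U1 b by apply: sQ1.
    have [_ U2b] := QV b (proj1 Bb').
    by have : (U1 `&` U2) b by []; rewrite U12.
Qed.

Lemma subgroup_pw S x n : is_subgroup mul inv one S -> S x -> S (pw x n).
Proof. by case=> S1 SM _ Sx; elim: n => //= n IH; apply: SM. Qed.

Lemma open_subgroup_in V : clopen V -> V one ->
  exists U, [/\ is_subgroup mul inv one U, U `<=` V & nbhs one U].
Proof.
move=> [oV cV] V1.
have cptV : compact V by apply: (subclosed_compact cV Hcpt).
have nO : \forall o \near nbhs one, V `<=` (fun v => V (v ⋅ o)).
  apply: (iffLR (compact_near_coveringP V) cptV) => v Vv.
  have : nbhs (v ⋅ one) V by rewrite mulg1; apply: open_nbhs_nbhs.
  move=> /nbhs_mul2 [P [Q [nP nQ sPQ]]].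
  exists (P, Q); first by split.
  by case=> a b [/= Pa Qb]; apply: sPQ.
pose O := [set o | V `<=` (fun v => V (v ⋅ o))].
have sO o v : O o -> V v -> V (v ⋅ o) by move=> Oo Vv; apply: Oo.
change (nbhs one O) in nO.
pose W := [set g | forall v, V v -> V (v ⋅ g) /\ V (v ⋅ inv g)].
have nW : nbhs one W.
  have nO' : nbhs one [set o | O (inv o)] by apply: nbhs_inv; rewrite inv1.
  apply: filterS (filterI nO nO') => g [Og Oig] v Vv; split.
  - exact: sO.
  - exact: sO.
exists W; split => //.
- split.
  + by move=> v Vv; rewrite inv1 mulg1.
  + move=> g h Wg Wh v Vv; split.
    * by rewrite mulA; exact: (proj1 (Wh _ (proj1 (Wg _ Vv)))).
    * by rewrite invM mulA; exact: (proj2 (Wg _ (proj2 (Wh _ Vv)))).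
  + by move=> g Wg v Vv; rewrite invK; have [h1 h2] := Wg _ Vv; split.
- by move=> g Wg; have [+ _] := Wg one V1; rewrite mul1g.
Qed.

Lemma subgroup_nbhs_closed U : is_subgroup mul inv one U -> nbhs one U -> closed U.
Proof.
move=> [U1 UM UV] nU p cp.
have [h [Uh Uh']] := cp _ (nbhs_transl p nU).
have -> : p = h ⋅ inv (inv p ⋅ h) by rewrite invM invK mulA mulgV mul1g.
by apply: UM => //; apply: UV.
Qed.

Lemma pw_in_nbhs U d : is_subgroup mul inv one U -> nbhs one U ->
  exists m, (0 < m)%N /\ U (pw d m).
Proof.
move=> sU nU; have [U1 UM UV] := sU.
pose g (n : nat) := [set pw d k | k in [set k | (n <= k)%N]].
pose F := filter_from [set: nat] g.
have FF : ProperFilter F.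
  apply: filter_from_proper; last by move=> n _; exists (pw d n); exists n => /=.
  apply: filter_from_filter; first by exists 0%N.
  move=> i j _ _; exists (maxn i j) => //.
  move=> _ [k /= hk <-]; split; exists k => //=.
    exact: leq_trans (leq_maxl i j) hk.
  exact: leq_trans (leq_maxr i j) hk.
have [z [_ clz]] := Hcpt FF (filterT).
have nz := nbhs_transl z nU.
have [_ [[k _ <-] Uk]] := clz (g 0%N) _ (ex_intro2 _ _ 0%N I (fun x h => h)) nz.
have [_ [[l /= hl <-] Ul]] := clz (g k.+1) _ (ex_intro2 _ _ k.+1 I (fun x h => h)) nz.
exists (l - k)%N; split; first by rewrite subn_gt0.
have := UM _ _ (UV _ Uk) Ul.
rewrite invM invK -mulA mulVKg.
suff -> : pw d l = pw d k ⋅ pw d (l - k) by rewrite mulKg.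
by rewrite -pwD subnKC // ltnW.
Qed.


Lemma closed_cent d : closed [set g | g ⋅ d = d ⋅ g].
Proof.
move=> p cp; apply: Hhaus => A B nA nB.
have nI : nbhs p ([set y | A (y ⋅ d)] `&` [set y | B (d ⋅ y)]) by apply: filterI; [apply: nbhs_rmul|apply: nbhs_lmul].
have [y [/= yd [Ay By]]] := cp _ nI.
by exists (y ⋅ d); split => //; rewrite yd.
Qed.

Definition cgen (S : set T) :=
  \bigcap_(K in [set K | closed_subgroup mul inv one K /\ S `<=` K]) K.

Lemma cgen_closed_subgroup S : closed_subgroup mul inv one (cgen S).
Proof. by apply: closed_subgroupI => K []. Qed.

Lemma cgen_min S K : closed_subgroup mul inv one K -> S `<=` K -> cgen S `<=` K.
Proof. by move=> cK sK x; apply. Qed.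

Variable HC : forall H, closed_subgroup mul inv one H ->
  exists K, closed_subgroup mul inv one K /\ permutable_complement mul inv one H K.

Lemma torsion_elt E d : closed_subgroup mul inv one E -> E d -> d <> one ->
  exists k m, [/\ E k, k <> one, (0 < m)%N & pw k m = one].
Proof.
move=> cE Ed d1.
have [V [cV V1 nVd]] := zero_dim (nesym d1).
have [U [sU UV nU]] := open_subgroup_in cV V1.
have cU := subgroup_nbhs_closed sU nU.
have [m [m0 Um]] := pw_in_nbhs d sU nU.
pose Z := cgen [set pw d m].
have cZ := cgen_closed_subgroup [set pw d m].
have ZU : Z `<=` U by apply: cgen_min => // _ ->.
have ZE : Z `<=` E by apply: cgen_min => // _ ->; apply: subgroup_pw => //; case: cE.
have Zc : Z `<=` [set g | g ⋅ d = d ⋅ g].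
  apply: cgen_min => [|_ ->]; last by apply: commute_pw.
  split; last exact: closed_cent.
  split => /=; first by rewrite mul1g mulg1.
  - by move=> x y hx hy; rewrite -mulA hy !mulA hx.
  - by move=> x hx; apply: commute_inv.
have Zm : Z (pw d m) by move=> K [_ h]; apply: h.
have [K [cK [sK dec ZK]]] := HC cZ.
have [z [k [Zz Kk dzk]]] := dec d.
have ke : k = inv z ⋅ d by rewrite dzk mulKg.
exists k, m; split => //.
- rewrite ke; case: cE => -[_ EM EV] _; apply: EM => //; apply: EV; exact: ZE.
- move=> k1; apply: nVd; apply: UV; apply: ZU.
  by rewrite dzk k1 mulg1.
- have : (Z `&` K) (pw k m).
    split; last by apply: subgroup_pw => //; case: cK.
    rewrite ke pwMc; last by apply: commute_inv; apply: Zc.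
    have [sZ _] := cZ; have [_ ZM ZV] := sZ; apply: ZM => //.
    by rewrite -inv_pw; apply: ZV; exact: (subgroup_pw m sZ Zz).
  by rewrite ZK.
Qed.

Lemma prime_elt k m : k <> one -> (0 < m)%N -> pw k m = one ->
  exists p r, [/\ prime p, pw k r <> one & pw (pw k r) p = one].
Proof.
elim: m {-2}m (leqnn m) k => [|n IH] m hm k k1 m0 km.
  by move: m0; rewrite leqn0 in hm; rewrite (eqP hm).
have m1 : (1 < m)%N.
  rewrite ltn_neqAle m0 andbT; apply/eqP => m1; apply: k1.
  by rewrite -(pw1 k) m1.
pose p := pdiv m.
have pp : prime p by apply: pdiv_prime.
have pm : (p %| m)%N by apply: pdiv_dvd.
pose r := (m %/ p)%N.
have mr : m = (r * p)%N by rewrite divnK.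
have [kr|kr] := pselect (pw k r = one); last first.
  by exists p, r; split => //; rewrite -pwM -mr.
have r0 : (0 < r)%N by rewrite divn_gt0 ?prime_gt0 // dvdn_leq.
have rlt : (r <= n)%N.
  have : (r < m)%N by rewrite ltn_Pdiv // prime_gt1.
  by move=> h; rewrite -ltnS; apply: leq_trans h hm.
exact: IH r rlt k k1 r0 kr.
Qed.


Lemma pw_mod y p n : pw y p = one -> pw y n = pw y (n %% p).
Proof.
move=> yp; rewrite {1}(divn_eq n p) pwD mulnC pwM yp pw1g mul1g //.
Qed.

Lemma finite_closed (S : set T) : finite_set S -> closed S.
Proof. by move=> fS; apply: compact_closed => //; apply: finite_compact. Qed.

Lemma cyc_closed_subgroup y p : (0 < p)%N -> pw y p = one ->
  closed_subgroup mul inv one [set pw y j | j in `I_p].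
Proof.
move=> p0 yp; split; last first.
  by apply: finite_closed; apply: finite_image.
split.
- by exists 0%N.
- move=> _ _ [i _ <-] [j _ <-]; exists ((i + j) %% p)%N; first by rewrite /= ltn_mod.
  by rewrite -pw_mod // pwD.
- move=> _ [j /= jp <-]; exists ((p - j) %% p)%N; first by rewrite /= ltn_mod.
  rewrite -pw_mod //; apply: inv_uniq; rewrite -pwD subnKC //; exact: ltnW.
Qed.

Variable A : set T.
Hypothesis HAc : closed_subgroup mul inv one A.
Hypothesis HAn : normalized_by mul inv [set: T] A.
Hypothesis HAab : abelian_set mul A.

Lemma conj_decomp x k n : n ⋅ x = x ⋅ n ->
  inv (x ⋅ k) ⋅ (n ⋅ (x ⋅ k)) = inv k ⋅ (n ⋅ k).
Proof.
move=> hx; rewrite invM [n ⋅ (x ⋅ k)]mulA hx -mulA -mulA.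
by rewrite (mulA (inv x)) mulVg mul1g.
Qed.

Lemma L0 X E : closed_subgroup mul inv one X -> closed_subgroup mul inv one E ->
  X `<=` E -> E `<=` A -> normalized_by mul inv [set: T] E ->
  exists N, [/\ closed_subgroup mul inv one N, N `<=` E,
    normalized_by mul inv [set: T] N,
    (forall e, E e -> exists x n, [/\ X x, N n & e = x ⋅ n]) &
    (forall z, X z -> N z -> z = one)].
Proof.
move=> cX cE XE EA nE.
have [K [cK [sK dec XK]]] := HC cX.
have [[E1 EM EV] clE] := cE; have [[K1 KM KV] clK] := cK.
exists (E `&` K); split.
- split; last exact: closedI.
  split; [by []| |].
  + by move=> x y [Ex Kx] [Ey Ky]; split; [apply: EM|apply: KM].
  + by move=> x [Ex Kx]; split; [apply: EV|apply: KV].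
- by move=> z [].
- move=> g n _ [En Kn]; have [x [k [Xx Kk ->]]] := dec g.
  rewrite conj_decomp; last by apply: HAab; [apply: EA|apply: EA; apply: XE].
  split; first by apply: nE.
  exact: KM _ _ (KV _ Kk) (KM _ _ Kn Kk).
- move=> e Ee; have [x [k [Xx Kk exk]]] := dec e.
  exists x, k; split => //; split => //.
  have -> : k = inv x ⋅ e by rewrite exk mulKg.
  by apply: EM => //; apply: EV; apply: XE.
- by move=> z Xz [_ Kz]; have : (X `&` K) z by []; rewrite XK.
Qed.

Definition cycc M c p := [/\ prime p, A c, ~ M c, M (pw c p) &
  forall a, A a -> exists j, (j < p)%N /\ exists m, M m /\ a = pw c j ⋅ m].

Definition goodw M c p := [/\ closed_subgroup mul inv one M, M `<=` A,
  normalized_by mul inv [set: T] M & cycc M c p].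

Lemma bezout_in M c p j : is_subgroup mul inv one M -> prime p ->
  M (pw c p) -> (0 < j < p)%N -> M (pw c j) -> M c.
Proof.
move=> [M1 MM MV] pp Mp /andP [j0 jp] Mj.
have cop : coprime j p.
  by rewrite coprime_sym prime_coprime // gtnNdvd.
have [[u v] /= huv] := (elimT (coprimeP p j0)) cop.
have e : (u * j = v * p + 1)%N.
  have : (v * p < u * j)%N by rewrite -subn_gt0 huv.
  move=> lt; rewrite -huv subnKC //; exact: ltnW.
have Muj : M (pw c (u * j)) by rewrite mulnC pwM; apply: subgroup_pw.
have Mvp : M (pw c (v * p)) by rewrite mulnC pwM; apply: subgroup_pw.
move: Muj; rewrite e pwD pw1 => h.
by have := MM _ _ (MV _ Mvp) h; rewrite mulKg.
Qed.


Lemma subA x y : A x -> A y -> A (x ⋅ y).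
Proof. by case: HAc => -[_ h _] _; apply: h. Qed.
Lemma subAV x : A x -> A (inv x).
Proof. by case: HAc => -[_ _ h] _; apply: h. Qed.
Lemma subApw x n : A x -> A (pw x n).
Proof. by case: HAc => h _; apply: subgroup_pw. Qed.

Lemma make_good D y p : closed_subgroup mul inv one D -> D `<=` A ->
  normalized_by mul inv [set: T] D -> D y -> y <> one -> prime p ->
  pw y p = one -> exists c M, D c /\ goodw M c p.
Proof.
move=> cD DA nD Dy y1 pp yp.
have p0 := prime_gt0 pp.
pose X := [set pw y j | j in `I_p].
have cX : closed_subgroup mul inv one X by apply: cyc_closed_subgroup.
have [[D1 DM DV] clD] := cD.
have XD : X `<=` D by move=> _ [j _ <-]; apply: subgroup_pw.
have [N [cN ND nN decD XN]] := L0 cX cD XD DA nD.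
have NA : N `<=` A by move=> z /ND /DA.
have [C [cC CA nC decA NC]] := L0 cN HAc NA (fun _ h => h) HAn.
have [[N1 NM NV] clN] := cN; have [[C1 CM CV] clC] := cC.
have [n0 [c [Nn0 Cc yE]]] := decA y (DA _ Dy).
have An0 : A n0 by apply: NA.
have Ac : A c by apply: CA.
have ce : c = inv n0 ⋅ y by rewrite yE mulKg.
have Dc : D c by rewrite ce; apply: DM => //; apply: DV; apply: ND.
have c1 : c <> one.
  move=> c1; apply: y1; apply: XN; first by exists 1%N; rewrite ?pw1 //= prime_gt1.
  by rewrite yE c1 mulg1.
have cp : pw c p = one.
  apply: NC; last by apply: subgroup_pw.
  rewrite ce pwMc; last by apply: HAab; [apply: subAV|apply: DA].
  by rewrite yp mulg1; apply: subgroup_pw => //; apply: NV.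
pose Q := C `&` D.
have cQ : closed_subgroup mul inv one Q.
  split; last exact: closedI.
  split; [by []| |].
  + by move=> a b [Ca Da] [Cb Db]; split; [apply: CM|apply: DM].
  + by move=> a [Ca Da]; split; [apply: CV|apply: DV].
have QA : Q `<=` A by move=> z [_ /DA].
have nQ : normalized_by mul inv [set: T] Q.
  by move=> g z _ [Cz Dz]; split; [apply: nC|apply: nD].
have [M [cM MA nM decQ QM]] := L0 cQ HAc QA (fun _ h => h) HAn.
exists c, M; split => //; split => //; split => //.
- by move=> Mc; apply: c1; apply: QM.
- by rewrite cp; case: cM => -[].
- move=> a Aa; have [q [m [[Cq Dq] Mm aE]]] := decQ a Aa.
  have [x [n' [[j /= jp <-] Nn' qE]]] := decD q Dq.
  exists j; split => //; exists m; split => //; rewrite aE; congr (_ ⋅ m).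
  have yj : pw y j = pw n0 j ⋅ pw c j.
    by rewrite yE pwMc //; apply: HAab.
  have Cpc : C (pw c j) by apply: subgroup_pw.
  suff : inv (pw c j) ⋅ q = one.
    by move=> h; rewrite -(mulVKg (pw c j) q) h mulg1.
  apply: NC; last by apply: CM => //; apply: CV.
  rewrite qE yj.
  have hc : pw n0 j ⋅ pw c j = pw c j ⋅ pw n0 j by apply: HAab; apply: subApw.
  rewrite hc -mulA mulKg.
  by apply: NM => //; exact: subgroup_pw (proj1 cN) Nn0.
Qed.


Definition good M := exists c p, goodw M c p.

Definition indep (S : set (set T)) := S `<=` good /\
  forall M, S M -> exists x, [/\ A x, ~ M x & forall M', S M' -> M' <> M -> M' x].

Lemma A_minus_closed M c p : goodw M c p -> closed (A `\` M).
Proof.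
move=> [cM MA nM [pp Ac nMc Mcp decA]].
have [[M1 MM MV] clM] := cM.
have -> : A `\` M = \bigcup_(j in [set j | (0 < j < p)%N])
    (A `&` [set a | M (inv (pw c j) ⋅ a)]).
  apply/seteqP; split.
  - move=> a [Aa nMa]; have [j [jp [m [Mm aE]]]] := decA a Aa.
    exists j.
      rewrite /= jp andbT lt0n; apply/eqP => j0; apply: nMa.
      by rewrite aE j0 /= mul1g.
    by split => //=; rewrite aE mulKg.
  - move=> a [j /= /andP [j0 jp] [Aa Ma]]; split => // Mb.
    apply: nMc; apply: (bezout_in (p := p) (j := j)) => //; first by rewrite j0 jp.
    have := MM _ _ Mb (MV _ Ma); rewrite invM invK mulA mulgV mul1g //.
apply: closed_bigcup.
  by apply: (sub_finite_set (B := `I_p)) => // j /= /andP [].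
move=> j _; apply: closedI; first by case: HAc.
exact: closed_lmul.
Qed.

Lemma chain_indep (F : set (set (set T))) : F `<=` indep ->
  total_on F subset -> indep (\bigcup_(X in F) X).
Proof.
move=> Fi Ft; split.
  by move=> M [S FS SM]; have [+ _] := Fi S FS; apply.
move=> M [S0 FS0 S0M].
have [c [p gM]] := (proj1 (Fi S0 FS0)) M S0M.
pose g S := [set x | (A `\` M) x /\ forall M', S M' -> M' <> M -> M' x].
pose G := filter_from [set S | F S /\ S M] g.
have PG : ProperFilter G.
  apply: filter_from_proper; last first.
    move=> S [FS SM]; have [x [Ax nMx hx]] := (proj2 (Fi S FS)) M SM.
    by exists x.
  apply: filter_from_filter; first by exists S0.
  move=> S1 S2 [FS1 S1M] [FS2 S2M]; have [s12|s21] := Ft S1 S2 FS1 FS2.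
  - exists S2 => // x [hx hM]; split; split => // M' S'M'; apply: hM.
    exact: s12.
  - exists S1 => // x [hx hM]; split; split => // M' S'M'; apply: hM.
    exact: s21.
have cAM := A_minus_closed gM.
have cpt : compact (A `\` M) by apply: (subclosed_compact cAM Hcpt).
have GAM : G (A `\` M) by exists S0 => // x [].
have [x [[Ax nMx] clx]] := cpt G PG GAM.
exists x; split => // M' [S1 FS1 S1M'] M'M.
have [c' [p' [[_ clM'] _ _ _]]] := (proj1 (Fi S1 FS1)) M' S1M'.
have [k [Fk kM kM']] : exists k, [/\ F k, k M & k M'].
  have [s01|s10] := Ft S0 S1 FS0 FS1.
  - by exists S1; split => //; apply: s01.
  - by exists S0; split => //; apply: s10.
apply: clM' => W nW.
have Gk : G (g k) by exists k.
have [z [[_ hz] Wz]] := clx _ _ Gk nW.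
by exists z; split => //; apply: hz.
Qed.


Definition Dset (S : set (set T)) := [set a | A a /\ forall M, S M -> M a].

Lemma Dset_cs S : indep S -> [/\ closed_subgroup mul inv one (Dset S), Dset S `<=` A
  & normalized_by mul inv [set: T] (Dset S)].
Proof.
move=> [Sg _].
have -> : Dset S = \bigcap_(K in [set K | K = A \/ S K]) K.
  apply/seteqP; split.
  - by move=> a [Aa Sa] K [->|SK] //; apply: Sa.
  - by move=> a h; split; [apply: h; left|move=> M SM; apply: h; right].
split.
- by apply: closed_subgroupI => K [->|/Sg [c [p [cK _ _ _]]]].
- by move=> a h; apply: h; left.
- move=> g a _ h K [->|SK]; first by apply: HAn => //; apply: h; left.
  have [c [p [_ _ nK _]]] := Sg K SK.
  by apply: nK => //; apply: h; right.
Qed.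

Lemma extend S d : indep S -> Dset S d -> d <> one ->
  exists B, S `<` B /\ indep B.
Proof.
move=> iS Dd d1.
have [cD DA nD] := Dset_cs iS.
have [k [m [Dk k1 m0 km]]] := torsion_elt cD Dd d1.
have [p [r [pp kr1 krp]]] := prime_elt k1 m0 km.
have Dkr : Dset S (pw k r) by apply: subgroup_pw => //; case: cD.
have [c [M0 [Dc gM0]]] := make_good cD DA nD Dkr kr1 pp krp.
have [cM0 M0A nM0 [_ Ac nM0c M0cp decM0]] := gM0.
have M0S : ~ S M0 by move=> SM0; apply: nM0c; apply: (proj2 Dc).
exists (S `|` [set M0]); split.
  split; first by move=> M SM; left.
  by move=> h; apply: M0S; apply: h; right.
split.
  by move=> M [/(proj1 iS)//|->]; exists c, p.
move=> M [SM|->].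
- have [x0 [Ax0 nMx0 hx0]] := (proj2 iS) M SM.
  have [j [jp [m' [M0m' x0E]]]] := decM0 x0 Ax0.
  have me : m' = inv (pw c j) ⋅ x0 by rewrite x0E mulKg.
  exists m'; split.
  + by rewrite me; apply: subA; [apply: subAV; apply: subApw|].
  + move=> Mm'; apply: nMx0; rewrite x0E.
    have [c' [p' [[sM _] _ _ _]]] := (proj1 iS) M SM.
    have [_ MM _] := sM.
    by apply: MM => //; apply: subgroup_pw => //; exact: (proj2 Dc).
  + move=> M' [SM'|->] M'M //.
    rewrite me; have [c' [p' [[sM' _] _ _ _]]] := (proj1 iS) M' SM'.
    have [_ MM MV] := sM'.
    apply: MM; last by apply: hx0.
    apply: MV; apply: subgroup_pw => //.
    exact: (proj2 Dc).
- exists c; split => // M' [SM'|->] M'M //.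
  exact: (proj2 Dc).
Qed.


Lemma gen_is_subgroup X : is_subgroup mul inv one (gen_subgroup mul inv one X).
Proof.
split.
- by move=> K [[]].
- move=> x y hx hy K [sK XK]; have [_ KM _] := sK.
  by apply: KM; [apply: hx|apply: hy].
- move=> x hx K [sK XK]; have [_ _ KV] := sK.
  by apply: KV; apply: hx.
Qed.

Lemma gen_sup X : X `<=` gen_subgroup mul inv one X.
Proof. by move=> x Xx K [_ XK]; apply: XK. Qed.

Lemma closure_gen_sub K X : closed_subgroup mul inv one K -> X `<=` K ->
  closure (gen_subgroup mul inv one X) `<=` K.
Proof.
move=> [sK cK] XK; apply: subset_trans cK; apply: closureS.
by move=> x hx; apply: hx.
Qed.

Section Final.
Variable S : set (set T).
Hypothesis iS : indep S.
Hypothesis Dtriv : forall a, Dset S a -> a = one.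

Definition Hs (M : set T) := [set a | A a /\ forall M', S M' -> M' <> M -> M' a].

Lemma Hs_cs M : [/\ closed_subgroup mul inv one (Hs M), Hs M `<=` A
  & normalized_by mul inv [set: T] (Hs M)].
Proof.
have [Sg _] := iS.
have -> : Hs M = \bigcap_(K in [set K | K = A \/ (S K /\ K <> M)]) K.
  apply/seteqP; split.
  - by move=> a [Aa Sa] K [->|[SK KM]] //; apply: Sa.
  - move=> a h; split; first by apply: h; left.
    by move=> M' SM' M'M; apply: h; right.
split.
- by apply: closed_subgroupI => K [->|[/Sg [c [p [cK _ _ _]]] _]].
- by move=> a h; apply: h; left.
- move=> g a _ h K [->|[SK KM]]; first by apply: HAn => //; apply: h; left.
  have [c [p [_ _ nK _]]] := Sg K SK.
  by apply: nK => //; apply: h; right.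
Qed.

Lemma Hs_struct M : S M -> exists h p, [/\ prime p,
  Hs M = [set pw h j | j in `I_p], {in `I_p &, injective (pw h)} &
  forall a, A a -> exists t m, [/\ Hs M t, M m & a = t ⋅ m]].
Proof.
move=> SM.
have [cHs HsA nHs] := Hs_cs M.
have [[Hs1 HsM HsV] _] := cHs.
have [c [p [cM MA nM [pp Ac nMc Mcp decA]]]] := (proj1 iS) M SM.
have [[M1 MM MV] clM] := cM.
have sM := proj1 cM; have sHs := proj1 cHs.
have [x [Ax nMx hx]] := (proj2 iS) M SM.
have Hsx : Hs M x by split.
have [k [kp [m0 [Mm0 xE]]]] := decA x Ax.
have Am0 : A m0 by apply: MA.
have k0 : (0 < k)%N.
  by rewrite lt0n; apply/eqP => k0; apply: nMx; rewrite xE k0 mul1g.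
have cop : coprime k p by rewrite coprime_sym prime_coprime // gtnNdvd.
have [[u v] /= huv] := (elimT (coprimeP p k0)) cop.
have e : (k * u = 1 + v * p)%N.
  have : (v * p < u * k)%N by rewrite -subn_gt0 huv.
  move=> lt; rewrite mulnC addnC -huv subnKC //; exact: ltnW.
pose h := pw x u.
pose m1 := inv c ⋅ h.
have hE : h = c ⋅ m1 by rewrite /m1 mulVKg.
have Mvp : M (pw c (v * p)) by rewrite mulnC pwM; apply: subgroup_pw.
have Mm1 : M m1.
  rewrite /m1 /h xE pwMc; last by apply: HAab => //; apply: subApw.
  rewrite -pwM e pwD pw1 -!mulA mulKg.
  by apply: MM => //; apply: subgroup_pw.
have Am1 : A m1 by apply: MA.
have hj j : pw h j = pw c j ⋅ pw m1 j.
  by rewrite hE pwMc //; apply: HAab.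
have Hsh : Hs M h by apply: subgroup_pw.
have dech a : A a -> exists j, (j < p)%N /\ exists m, M m /\ a = pw h j ⋅ m.
  move=> Aa; have [j [jp [m2 [Mm2 aE]]]] := decA a Aa.
  exists j; split => //; exists (inv (pw m1 j) ⋅ m2); split.
    by apply: MM => //; apply: MV; apply: subgroup_pw.
  by rewrite hj -mulA mulVKg.
exists h, p; split => //.
- apply/seteqP; split; last by move=> _ [j _ <-]; apply: subgroup_pw.
  move=> z Hz; have [j [jp [m [Mm zE]]]] := dech z (HsA _ Hz).
  exists j => //; rewrite zE.
  suff -> : m = one by rewrite mulg1.
  apply: Dtriv; split; first by apply: MA.
  move=> M' SM'; have [->|M'M] := pselect (M' = M) => //.
  have -> : m = inv (pw h j) ⋅ z by rewrite zE mulKg.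
  have [[_ _] _ _] := Hs_cs M.
  have Hm : Hs M (inv (pw h j) ⋅ z).
    by apply: HsM => //; apply: HsV; apply: subgroup_pw.
  by apply: (proj2 Hm).
- have key i j : (i < j)%N -> (j < p)%N -> pw h i = pw h j -> False.
    move=> ij jp hij.
    have e1 : pw h (j - i) = one.
      apply: (@mulg_inj (pw h i)); rewrite -pwD subnKC ?mulg1 //.
      exact: ltnW.
    move: e1; rewrite hj => /mul_eq1 ce.
    apply: nMc; apply: (bezout_in (p := p) (j := j - i)) => //.
      by rewrite subn_gt0 ij /= (leq_ltn_trans (leq_subr i j) jp).
    by rewrite ce; apply: MV; apply: subgroup_pw.
  move=> i j ip jp hij; move: ip jp; rewrite !in_setE /= => ip jp.
  case: (ltngtP i j) => // [ij|ji].
    by exfalso; exact: key i j ij jp hij.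
  by exfalso; exact: key j i ji ip (esym hij).
- move=> a Aa; have [j [jp [m [Mm aE]]]] := dech a Aa.
  exists (pw h j), m; split => //; exact: subgroup_pw.
Qed.

Lemma dense (a : T) : A a ->
  closure (gen_subgroup mul inv one (\bigcup_(i : {M | S M}) Hs (sval i))) a.
Proof.
move=> Aa W nW.
set Gn := gen_subgroup _ _ _ _.
have sGn : is_subgroup mul inv one Gn by apply: gen_is_subgroup.
have HsGn M (SM : S M) t : Hs M t -> Gn t.
  by move=> Ht; apply: gen_sup; exists (exist _ M SM).
pose O := [set z | W (a ⋅ inv z)].
have nO : nbhs one O.
  have : nbhs (a ⋅ inv one) W by rewrite inv1 mulg1.
  by move=> /nbhs_lmul /nbhs_inv.
pose Oi := O°.
have nOi : nbhs one Oi by apply: nbhs_interior.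
have [Fs [FsS hFs]] : exists Fs : seq (set T), (forall M, List.In M Fs -> S M) /\
    forall z, A z -> (forall M, List.In M Fs -> M z) -> Oi z.
  apply: contrapT => hne.
  pose g (Fs : seq (set T)) :=
    [set z | A z /\ (forall M, List.In M Fs -> M z) /\ ~ Oi z].
  pose G := filter_from [set Fs | forall M, List.In M Fs -> S M] g.
  have PG : ProperFilter G.
    apply: filter_from_proper.
      apply: filter_from_filter; first by exists [::].
      move=> F1 F2 h1 h2; exists (F1 ++ F2).
        by move=> M /List.in_app_iff [] ?; [apply: h1|apply: h2].
      move=> z [Az [hz nz]]; split.
        split => //; split => // M hM; apply: hz; apply/List.in_app_iff; by left.
      split => //; split => // M hM; apply: hz; apply/List.in_app_iff; by right.
    move=> Fs hF; apply: contrapT => ne; apply: hne; exists Fs; split => //.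
    move=> z Az hz; apply: contrapT => nz; apply: ne; exists z; split => //.
  have cK : compact (A `&` ~` Oi).
    apply: (subclosed_compact _ Hcpt) => //; apply: closedI; first by case: HAc.
    by apply: open_closedC; apply: open_interior.
  have GK : G (A `&` ~` Oi) by exists [::] => // z [Az [_ nz]].
  have [z [[Az nz] clz]] := cK G PG GK.
  apply: nz; have -> : z = one; last exact: nbhs_singleton.
  apply: Dtriv; split => // M SM.
  have [c [p [[_ clM] _ _ _]]] := (proj1 iS) M SM.
  apply: clM => B nB.
  have Gm : G (g [:: M]) by exists [:: M] => //= M' [<-|[]].
  have [w [[_ [hw _]] Bw]] := clz _ _ Gm nB.
  by exists w; split => //; apply: hw; left.
have dec : forall Fs, (forall M, List.In M Fs -> S M) -> forall b, A b ->
    exists h m, [/\ Gn h, A m, (forall M, List.In M Fs -> M m) & b = h ⋅ m].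
  elim => [|M Fs' IH] hF b Ab.
    exists one, b; split => //; [by case: sGn | by rewrite mul1g].
  have [h' [m' [Gh' Am' hm' bE]]] := IH (fun M' h => hF M' (or_intror h)) b Ab.
  have SM := hF M (or_introl erefl).
  have [h0 [p [_ _ _ decM]]] := Hs_struct SM.
  have [t [m'' [Hst Mm'' mE]]] := decM m' Am'.
  have [c [p' [[[_ MM MV] _] MA _ _]]] := (proj1 iS) M SM.
  exists (h' ⋅ t), m''; split.
  - by case: sGn => _ GM _; apply: GM => //; exact: HsGn SM t Hst.
  - exact: MA.
  - move=> M' [<-|inM'] //.
    have [->|ne] := pselect (M' = M) => //.
    have SM' : S M' by apply: hF; right.
    have [c' [p'' [[[_ MM' MV'] _] _ _ _]]] := (proj1 iS) M' SM'.
    have -> : m'' = inv t ⋅ m' by rewrite mE mulKg.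
    apply: MM'; last by apply: hm'.
    by apply: MV'; apply: (proj2 Hst).
  - by rewrite bE mE mulA.
have [h [m [Gh Am hm aE]]] := dec Fs FsS a Aa.
have Om : O m by apply: interior_subset; apply: hFs.
exists h; split => //.
by move: Om; rewrite /O /= aE mulgK.
Qed.

Lemma inter : (exists M, S M) ->
  \bigcap_(i : {M | S M}) closure (gen_subgroup mul inv one
     (\bigcup_(j in [set j | j <> i]) Hs (sval j))) = [set one].
Proof.
move=> [M0 SM0].
have [Sg _] := iS.
have sub i : forall M, S M -> M <> sval i -> Hs (sval i) `<=` M.
  by move=> M SM ne t [_ ht]; apply: ht.
apply/seteqP; split.
- move=> z hz; apply: Dtriv; split.
    have := hz (exist _ M0 SM0) I; apply: closure_gen_sub => //.
    by move=> t [j _ [At _]].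
  move=> M SM; have := hz (exist _ M SM) I.
  have [c [p [cM _ _ _]]] := Sg M SM.
  apply: closure_gen_sub => // t [[M' SM'] /= ne [_ ht]].
  apply: ht => // e; apply: ne; subst M'.
  by rewrite (Prop_irrelevance SM' SM).
- move=> _ -> i _; apply: subset_closure.
  by have [] := gen_is_subgroup (\bigcup_(j in [set j | j <> i]) Hs (sval j)).
Qed.

End Final.


Lemma main_sec : A <> [set one] ->
  exists (I : Type) (Hs : I -> set T),
    internal_cartesian_product mul inv one A Hs /\
    forall i, [/\ is_subgroup mul inv one (Hs i), Hs i `<=` A,
                  normalized_by mul inv [set: T] (Hs i)
                & has_prime_order (Hs i)].
Proof.
move=> A1.
have [S [iS maxS]] := @Zorn_bigcup (set T) indep chain_indep.
have Dtriv : forall a, Dset S a -> a = one.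
  move=> a Da; apply: contrapT => a1.
  have [B [SB iB]] := extend iS Da a1.
  exact: maxS B SB iB.
have neS : exists M, S M.
  apply: contrapT => nS; apply: A1; apply/seteqP; split.
    move=> a Aa; apply: Dtriv; split => // M SM; exfalso; apply: nS; by exists M.
  by move=> _ ->; case: HAc => -[].
exists {M | S M}, (fun i => Hs S (sval i)); split.
- split.
  + move=> i; have [cH HA nH] := Hs_cs iS (sval i); split => //.
    by move=> g h _ Hh; apply: nH.
  + apply/seteqP; split; first by move=> a Aa; apply: dense.
    by apply: closure_gen_sub => // t [i _ [At _]].
  + exact: (inter iS Dtriv neS).
- move=> i; have [cH HA nH] := Hs_cs iS (sval i); split => //; first by case: cH.
  have [h [p [pp HE inj _]]] := Hs_struct iS Dtriv (svalP i).
  exists p; split => //; rewrite HE.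
  exact: inj_card_eq inj.
Qed.

End Grp.

Theorem lemma2p9 (T : topologicalType) (mul : T -> T -> T) (inv : T -> T)
  (one : T) (A : set T) :
  profinite_C_group mul inv one ->
  closed_subgroup mul inv one A ->
  normalized_by mul inv [set: T] A ->
  abelian_set mul A ->
  A <> [set one] ->
  exists (I : Type) (Hs : I -> set T),
    internal_cartesian_product mul inv one A Hs /\
    forall i, [/\ is_subgroup mul inv one (Hs i), Hs i `<=` A,
                  normalized_by mul inv [set: T] (Hs i)
                & has_prime_order (Hs i)].
Proof.
move=> [[[HG Hmul Hinv] Hcpt Hhaus Htd] HC] HAc HAn HAab.
exact: (main_sec HG Hmul Hinv Hhaus Hcpt Htd HC HAc HAn HAab).
Qed.
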